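(* For any function $g=g(\mathbf{x}_p)\in C^1(\mathbb{R}^{p+1},\mathbb{A})$ (depending only on $\mathbf{x}_p$) and any $k\in\mathbb{N}$: $$D_{\mathbf{x}}(\underline{\mathbf{x}}_q^{2k}g)=\underline{\mathbf{x}}_q^{2k}(D_{\mathbf{x}_p}g)-2k\,\underline{\mathbf{x}}_q^{2k-1}g,\qquad D_{\mathbf{x}}(\underline{\mathbf{x}}_q^{2k+1}g)=\underline{\mathbf{x}}_q^{2k+1}(\overline{D}_{\mathbf{x}_p}g)-(2k+q)\,\underline{\mathbf{x}}_q^{2k}g,$$ $$\overline{D}_{\mathbf{x}}(\underline{\mathbf{x}}_q^{2k}g)=\underline{\mathbf{x}}_q^{2k}(\overline{D}_{\mathbf{x}_p}g)+2k\,\underline{\mathbf{x}}_q^{2k-1}g,\qquad \overline{D}_{\mathbf{x}}(\underline{\mathbf{x}}_q^{2k+1}g)=\underline{\mathbf{x}}_q^{2k+1}(D_{\mathbf{x}_p}g)+(2k+q)\,\underline{\mathbf{x}}_q^{2k}g.$$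
   Context: Let $\mathbb{A}$ be a real alternative algebra (the associator $[a,b,c]=(ab)c-a(bc)$ is an alternating trilinear function) with unity $1$, of finite real dimension $d>1$, equipped with an anti-involution $a\mapsto a^c$ (real linear, $a^c=a$ for real $a$, $(a^c)^c=a$, $(ab)^c=b^ca^c$). Let $t(x)=x+x^c$, $n(x)=xx^c$, $\mathbb{S}_{\mathbb{A}}=\{x: t(x)=0,\ n(x)=1\}$ (assumed nonempty) and $Q_{\mathbb{A}}=\mathbb{R}\cup\{x: t(x)\in\mathbb{R},\ n(x)\in\mathbb{R},\ 4n(x)>t(x)^2\}$. Let $M$ be a real subspace with $\mathbb{R}\subsetneq M\subseteq Q_{\mathbb{A}}$ having a basis $(v_0,\dots,v_m)$, $m\ge1$, $v_0=1$, $v_s\in\mathbb{S}_{\mathbb{A}}$, $v_sv_t=-v_tv_s$ for distinct $s,t\ge1$. Identify $x=\sum x_sv_s\in M$ with $(x_0,\dots,x_m)\in\mathbb{R}^{m+1}$; differentiate componentwise. Fix $p\in\{0,\dots,m-1\}$, $q=m-p$; $\mathbf{x}=\mathbf{x}_p+\underline{\mathbf{x}}_q$ with $\mathbf{x}_p=\sum_{s=0}^px_sv_s\in\mathbb{R}^{p+1}$, $\underline{\mathbf{x}}_q=\sum_{s=p+1}^m x_sv_s$; powers $\underline{\mathbf{x}}_q^j$ are taken in $\mathbb{A}$ (terms with coefficient $2k=0$ vanish). $D_{\mathbf{x}_p}f=\sum_{s=0}^p v_s\partial_{x_s}f$, $\overline{D}_{\mathbf{x}_p}f=\partial_{x_0}f-\sum_{s=1}^pv_s\partial_{x_s}f$,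 $D_{\mathbf{x}}f=\sum_{s=0}^mv_s\partial_{x_s}f$, $\overline{D}_{\mathbf{x}}f=\partial_{x_0}f-\sum_{s=1}^mv_s\partial_{x_s}f$ (all acting on the left). *)

(* Defs.v *)
From HB Require Import structures.
From mathcomp Require Import all_boot all_order all_algebra.
From mathcomp Require Import all_classical all_reals all_analysis.
Set Implicit Arguments.
Unset Strict Implicit.
Unset Printing Implicit Defensive.
Import Order.TTheory GRing.Theory Num.Theory.
Import numFieldNormedType.Exports.
Local Open Scope ring_scope.

(* The d-dimensional real algebra A is modelled on its underlying vector
   space R^d = 'rV[R]_d, with an explicit (bilinear) multiplication [mul],
   unity [one] and anti-involution [conj]. *)

Section Algebra.
Variables (R : realType) (d : nat).
Local Notation A := 'rV[R]_d.
Variables (mul : A -> A -> A) (one : A) (conj : A -> A).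

Definition is_real_elt (x : A) : Prop := exists r : R, x = r *: one.

Definition associator (a b c : A) : A := mul (mul a b) c - mul a (mul b c).

Definition alt_algebra_anti_inv : Prop :=
  [/\ (1 < d)%N,
      (forall (r : R) (a b c : A), mul (r *: a + b) c = r *: mul a c + mul b c)
      /\ (forall (r : R) (a b c : A), mul a (r *: b + c) = r *: mul a b + mul a c),
      (forall a : A, mul one a = a /\ mul a one = a),
      (forall a b : A, [/\ associator a a b = 0, associator a b a = 0
                         & associator b a a = 0])
    &
      [/\ (forall (r : R) (a b : A), conj (r *: a + b) = r *: conj a + conj b),
          (forall r : R, conj (r *: one) = r *: one),
          (forall a : A, conj (conj a) = a)
        & (forall a b : A, conj (mul a b) = mul (conj b) (conj a))]].

Definition trA (x : A) : A := x + conj x.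
Definition nrmA (x : A) : A := mul x (conj x).

Definition in_SA (x : A) : Prop := trA x = 0 /\ nrmA x = one.

Definition in_QA (x : A) : Prop :=
  is_real_elt x \/
  exists t n : R, [/\ trA x = t *: one, nrmA x = n *: one & t ^+ 2 < 4 * n].

Fixpoint apow (a : A) (j : nat) : A :=
  if j is j'.+1 then mul a (apow a j') else one.

(* (v_0, ..., v_m) is a basis of a subspace M with R ⊊ M ⊆ Q_A,
   v_0 = 1, v_s ∈ S_A and pairwise anticommuting for s >= 1 *)
Definition paravector_basis (m : nat) (v : 'I_m.+1 -> A) : Prop :=
  [/\ (1 <= m)%N /\ v ord0 = one,
      (forall s : 'I_m.+1, s != ord0 -> in_SA (v s)),
      (forall s t : 'I_m.+1, s != ord0 -> t != ord0 -> s != t ->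
          mul (v s) (v t) = - mul (v t) (v s)),
      (forall c : 'I_m.+1 -> R, \sum_(s < m.+1) c s *: v s = 0 ->
          forall s, c s = 0)
    &
      (forall c : 'I_m.+1 -> R, in_QA (\sum_(s < m.+1) c s *: v s))].

Definition partial (n : nat) (s : 'I_n) (f : 'rV[R]_n -> A) (x : 'rV[R]_n) : A :=
  'D_(delta_mx ord0 s) f x.

Definition C1 (n : nat) (f : 'rV[R]_n -> A) : Prop :=
  forall s : 'I_n, (forall x, derivable f x (delta_mx ord0 s))
                   /\ continuous (partial s f).

Definition Dop (n : nat) (w : 'I_n.+1 -> A) (f : 'rV[R]_n.+1 -> A) (x : 'rV[R]_n.+1) : A :=
  \sum_(s < n.+1) mul (w s) (partial s f x).

Definition Dbar (n : nat) (w : 'I_n.+1 -> A) (f : 'rV[R]_n.+1 -> A) (x : 'rV[R]_n.+1) : A :=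
  partial ord0 f x - \sum_(s < n.+1 | s != ord0) mul (w s) (partial s f x).

Definition xpart (m p : nat) (x : 'rV[R]_m.+1) : 'rV[R]_p.+1 :=
  \row_(i < p.+1) x ord0 (inord i).

Definition vpart (m p : nat) (v : 'I_m.+1 -> A) : 'I_p.+1 -> A :=
  fun i => v (inord i).

Definition xq (m p : nat) (v : 'I_m.+1 -> A) (x : 'rV[R]_m.+1) : A :=
  \sum_(s < m.+1 | (p < s)%N) x ord0 s *: v s.

End Algebra.
Arguments vpart {R d m} p v i.

(* Main.v *)
Require Import Defs.
From HB Require Import structures.
From mathcomp Require Import all_boot all_order all_algebra.
From mathcomp Require Import all_classical all_reals all_analysis.
From mathcomp Require Import ring zify.
Import Order.TTheory GRing.Theory Num.Theory.
Import numFieldNormedType.Exports.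
Local Open Scope ring_scope.

Set Implicit Arguments.
Unset Strict Implicit.

Section Alg.
Variables (R : realType) (d : nat).
Local Notation A := 'rV[R]_d.
Variables (mul : A -> A -> A) (one : A).
Hypothesis mulDl : forall (r : R) (a b c : A), mul (r *: a + b) c = r *: mul a c + mul b c.
Hypothesis mulDr : forall (r : R) (a b c : A), mul a (r *: b + c) = r *: mul a b + mul a c.

Lemma amul0l c : mul 0 c = 0.
Proof.
have := mulDl 1 0 0 c; rewrite !scale1r addr0 => H.
by apply: (@addrI _ (mul 0 c)); rewrite addr0 -H.
Qed.
Lemma amul0r c : mul c 0 = 0.
Proof.
have := mulDr 1 c 0 0; rewrite !scale1r addr0 => H.
by apply: (@addrI _ (mul c 0)); rewrite addr0 -H.
Qed.
Lemma amulZl r a c : mul (r *: a) c = r *: mul a c.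
Proof. by have := mulDl r a 0 c; rewrite !addr0 amul0l addr0. Qed.
Lemma amulZr r a c : mul c (r *: a) = r *: mul c a.
Proof. by have := mulDr r c a 0; rewrite !addr0 amul0r addr0. Qed.
Lemma amulAl a b c : mul (a + b) c = mul a c + mul b c.
Proof. by have := mulDl 1 a b c; rewrite !scale1r. Qed.
Lemma amulAr a b c : mul c (a + b) = mul c a + mul c b.
Proof. by have := mulDr 1 c a b; rewrite !scale1r. Qed.
Lemma amulNl a c : mul (- a) c = - mul a c.
Proof. by rewrite -scaleN1r amulZl scaleN1r. Qed.
Lemma amulNr a c : mul c (- a) = - mul c a.
Proof. by rewrite -scaleN1r amulZr scaleN1r. Qed.
Lemma amul_suml (I : Type) (r : seq I) (P : pred I) (F : I -> A) c :
  mul (\sum_(i <- r | P i) F i) c = \sum_(i <- r | P i) mul (F i) c.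
Proof.
elim/big_rec2: _ => [|i x y _ <-]; first exact: amul0l.
exact: amulAl.
Qed.
Lemma amul_sumr (I : Type) (r : seq I) (P : pred I) (F : I -> A) c :
  mul c (\sum_(i <- r | P i) F i) = \sum_(i <- r | P i) mul c (F i).
Proof.
elim/big_rec2: _ => [|i x y _ <-]; first exact: amul0r.
exact: amulAr.
Qed.
End Alg.

Unset Implicit Arguments.
Local Open Scope classical_set_scope.

Section Der.
Variables (R : realType) (V W : normedModType R).

Lemma D_line (f : V -> W) x v : 'D_v f x = 'D_1 (fun h : R => f (h *: v + x)) 0.
Proof.
rewrite /derive; set g1 := fun h => h^-1 *: _; set g2 := fun h => h^-1 *: _.
suff -> : g1 = g2 by [].
by rewrite funeqE /g1 /g2 => h /=; rewrite addr0 scale0r add0r [_%:A]mulr1.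
Qed.

Lemma is_deriveZr (f : V -> R) (w : W) x v df :
  is_derive x v f df -> is_derive x v (fun y => f y *: w) (df *: w).
Proof.
move=> [dfx <-].
have H : (fun h : R => h^-1 *: (((fun y => f y *: w) \o shift x) (h *: v) - f x *: w))
  = (fun h => (h^-1 *: ((f \o shift x) (h *: v) - f x)) *: w).
  by rewrite funeqE => h /=; rewrite -scalerBl scalerA.
have C : (fun h : R => h^-1 *: (((fun y => f y *: w) \o shift x) (h *: v) - f x *: w))
  @ 0^' --> 'D_v f x *: w.
  rewrite H; exact: cvgZr_tmp.
apply: DeriveDef; first exact: cvgP C.
exact: cvg_lim C.
Qed.

Lemma is_derive_coord n (f : V -> 'rV[R]_n) (i : 'I_n) x v df :
  is_derive x v f df -> is_derive x v (fun y => f y ord0 i) (df ord0 i).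
Proof.
move=> [dfx <-].
have H : (fun h : R => h^-1 *: (((fun y => f y ord0 i) \o shift x) (h *: v) - f x ord0 i))
  = (fun M : 'rV[R]_n => M ord0 i) \o (fun h => (h^-1 *: ((f \o shift x) (h *: v) - f x))).
  by rewrite funeqE => h /=; rewrite !mxE.
have C : (fun h : R => h^-1 *: (((fun y => f y ord0 i) \o shift x) (h *: v) - f x ord0 i))
  @ 0^' --> ('D_v f x) ord0 i.
  rewrite H; apply: continuous_cvg; first exact: coord_continuous.
  exact: dfx.
apply: DeriveDef; first exact: cvgP C.
exact: cvg_lim C.
Qed.

End Der.

Lemma is_derive_lin (R : realType) (V : normedModType R) n k (L : 'rV[R]_n -> 'rV[R]_k)
  (HL : forall (r : R) a b, L (r *: a + b) = r *: L a + L b)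
  (f : V -> 'rV[R]_n) x v df :
  is_derive x v f df -> is_derive x v (fun y => L (f y)) (L df).
Proof.
move=> Df.
have L0 : L 0 = 0.
  have := HL 1 0 0; rewrite !scale1r addr0 => H.
  by apply: (@addrI _ (L 0)); rewrite addr0 -H.
have LZ r a : L (r *: a) = r *: L a by have := HL r a 0; rewrite !addr0 L0 addr0.
have LD a b : L (a + b) = L a + L b by have := HL 1 a b; rewrite !scale1r.
have Ls (a : 'rV[R]_n) : L a = \sum_(j < n) a ord0 j *: L (delta_mx ord0 j).
  rewrite {1}(row_sum_delta a).
  elim/big_rec2: _ => [|j y z _ <-]; first exact: L0.
  by rewrite LD LZ.
have E : (fun y => L (f y)) = \sum_(j < n) (fun y => f y ord0 j *: L (delta_mx ord0 j)).
  by rewrite fct_sumE funeqE => y; rewrite Ls.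
rewrite E Ls; apply: is_derive_sum => j.
apply: is_deriveZr; exact: is_derive_coord.
Qed.

Local Close Scope classical_set_scope.

Set Implicit Arguments.
Unset Strict Implicit.

Lemma sum_antisym (R : realType) (V : lmodType R) n (G : 'I_n -> 'I_n -> V) :
  (forall s t, G s t = - G t s) -> \sum_s \sum_t G s t = 0.
Proof.
move=> HG.
have E : \sum_s \sum_t G s t = - \sum_s \sum_t G s t.
  rewrite [LHS]exchange_big /= -sumrN; apply: eq_bigr => t _.
  by rewrite -sumrN; apply: eq_bigr => s _.
have : (2%:R : R) *: \sum_s \sum_t G s t = 0.
  by rewrite scaler_nat mulr2n {1}E addNr.
move=> /(congr1 ( *:%R (2%:R^-1 : R))); rewrite scalerA mulVf ?pnatr_eq0 //.
by rewrite scale1r scaler0.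
Qed.

Section XAlg.
Variables (R : realType) (d : nat).
Local Notation A := 'rV[R]_d.
Variables (mul : A -> A -> A) (one : A).
Hypothesis mulDl : forall (r : R) (a b c : A), mul (r *: a + b) c = r *: mul a c + mul b c.
Hypothesis mulDr : forall (r : R) (a b c : A), mul a (r *: b + c) = r *: mul a b + mul a c.
Hypothesis mul1l : forall a, mul one a = a.
Hypothesis mul1r : forall a, mul a one = a.
Variables (m : nat) (v : 'I_m.+1 -> A) (p : nat).
Hypothesis Hv0 : v ord0 = one.
Hypothesis Hvv : forall s, s != ord0 -> mul (v s) (v s) = - one.
Hypothesis Hanti : forall s t, s != ord0 -> t != ord0 -> s != t ->
  mul (v s) (v t) = - mul (v t) (v s).

Definition rho (x : 'rV[R]_m.+1) : R := \sum_(s < m.+1 | (p < s)%N) x ord0 s ^+ 2.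

Lemma XX x : mul (xq p v x) (xq p v x) = - rho x *: one.
Proof.
rewrite /xq (amul_suml mulDl) (eq_bigr (fun s => \sum_(t < m.+1 | (p < t)%N)
   (x ord0 s * x ord0 t) *: mul (v s) (v t))); last first.
  move=> s _; rewrite (amul_sumr mulDr); apply: eq_bigr => t _.
  by rewrite (amulZl mulDl) (amulZr mulDr) scalerA.
pose G (s t : 'I_m.+1) := if [&& (p < s)%N, (p < t)%N & s != t] then
   (x ord0 s * x ord0 t) *: mul (v s) (v t) else 0.
have nz (s : 'I_m.+1) : (p < s)%N -> s != ord0.
  by move=> ps; apply/eqP => s0; rewrite s0 in ps.
have -> : \sum_(s < m.+1 | (p < s)%N) \sum_(t < m.+1 | (p < t)%N)
   (x ord0 s * x ord0 t) *: mul (v s) (v t) =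
   \sum_(s < m.+1 | (p < s)%N) (x ord0 s ^+ 2 *: (- one)) + \sum_s \sum_t G s t.
  have HGs s : \sum_t G s t = if (p < s)%N then \sum_(t < m.+1 | (p < t)%N && (t != s))
      (x ord0 s * x ord0 t) *: mul (v s) (v t) else 0.
    case ps: (p < s)%N; last by apply: big1 => t _; rewrite /G ps.
    rewrite [RHS]big_mkcond; apply: eq_bigr => t _; rewrite /G ps /= eq_sym.
    by case: (p < t)%N.
  rewrite (eq_bigr _ (fun s _ => HGs s)) -big_mkcond -big_split /=.
  apply: eq_bigr => s ps.
  by rewrite (bigD1 s) //= Hvv ?nz // expr2.
rewrite sum_antisym ?addr0; last first.
  move=> s t; rewrite /G; case ps: (p < s)%N; case pt: (p < t)%N => //=; rewrite ?oppr0 //.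
  rewrite eq_sym; case: eqP => /= [_|/eqP st]; first by rewrite oppr0.
  by rewrite (Hanti (nz _ ps) (nz _ pt)) 1?eq_sym // scalerN mulrC.
rewrite /rho scaleNr scaler_suml -sumrN; apply: eq_bigr => s _.
by rewrite scalerN.
Qed.

Lemma apow_even x k : apow mul one (xq p v x) k.*2 = (- rho x) ^+ k *: one.
Proof.
elim: k => [|k IH]; first by rewrite /= expr0 scale1r.
rewrite doubleS /= IH (amulZr mulDr) mul1r (amulZr mulDr) XX scalerA exprS mulrC.
by [].
Qed.

Lemma apow_odd x k : apow mul one (xq p v x) k.*2.+1 = (- rho x) ^+ k *: xq p v x.
Proof. by rewrite /= apow_even (amulZr mulDr) mul1r. Qed.
End XAlg.

Set Implicit Arguments.
Unset Strict Implicit.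

Section Line.
Variables (R : realType) (d : nat).
Local Notation A := 'rV[R]_d.
Variables (m : nat) (v : 'I_m.+1 -> A) (p : nat).
Variables (x : 'rV[R]_m.+1) (s : 'I_m.+1) (h : R).
Local Notation y := (h *: delta_mx ord0 s + x).

Lemma line_coord t : y ord0 t = h * (s == t)%:R + x ord0 t.
Proof. by rewrite !mxE /= eq_sym. Qed.

Lemma xq_low : (s <= p)%N -> xq p v y = xq p v x.
Proof.
move=> sp; apply: eq_bigr => t pt; rewrite line_coord.
have -> : (s == t) = false by apply/negbTE/eqP => st; move: pt; rewrite -st ltnNge sp.
by rewrite mulr0 add0r.
Qed.

Lemma rho_low : (s <= p)%N -> rho p y = rho p x.
Proof.
move=> sp; apply: eq_bigr => t pt; rewrite line_coord.
have -> : (s == t) = false by apply/negbTE/eqP => st; move: pt; rewrite -st ltnNge sp.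
by rewrite mulr0 add0r.
Qed.

Lemma xq_high : (p < s)%N -> xq p v y = h *: v s + xq p v x.
Proof.
move=> ps; rewrite /xq (bigD1 s) //= [X in _ = _ + X](bigD1 s) //= line_coord eqxx.
rewrite mulr1 scalerDl addrA; congr (_ + _); apply: eq_bigr => t /andP[_ ts].
by rewrite line_coord eq_sym (negbTE ts) mulr0 add0r.
Qed.

Lemma rho_high : (p < s)%N -> rho p y = rho p x + h * (2 * x ord0 s + h).
Proof.
move=> ps; rewrite /rho (bigD1 s) //= [X in _ = X + _](bigD1 s) //= line_coord eqxx mulr1.
set S1 := \sum_(i < m.+1 | _) _; set S2 := \sum_(i < m.+1 | _) _.
have -> : S1 = S2.
  apply: eq_bigr => t /andP[_ ts].
  by rewrite line_coord eq_sym (negbTE ts) mulr0 add0r.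
rewrite (natrD _ 1 1); ring.
Qed.

Lemma xpart_high : (p < s)%N -> xpart p y = xpart p x.
Proof.
move=> ps; apply/rowP => i; rewrite !mxE eqxx /=.
have -> : (inord i == s) = false.
  apply/negbTE/eqP => si; have ps' := ps; move: ps'; rewrite -si inordK; last by have := ltn_ord i; have := ltn_ord s; lia.
  by have := ltn_ord i; lia.
by rewrite mulr0 add0r.
Qed.

Lemma xpart_low : (p < m)%N -> (s <= p)%N -> xpart p y = h *: delta_mx ord0 (inord s) + xpart p x.
Proof.
move=> pm sp; apply/rowP => i; rewrite !mxE eqxx /=.
have -> : (inord i == s) = (i == inord s).
  rewrite -(inj_eq val_inj) -[RHS](inj_eq val_inj) /= !inordK //.
  by have := ltn_ord i; lia.
by [].
Qed.
End Line.

Set Implicit Arguments.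
Unset Strict Implicit.

Lemma is_derive_ext (R : realType) (V W : normedModType R) (f g : V -> W) x v df :
  (forall y, f y = g y) -> is_derive x v f df -> is_derive x v g df.
Proof. by move=> fg; have -> : f = g by apply/funext. Qed.

Arguments is_deriveZr {R V W f} w {x v df}.

Lemma dval (R : realType) (V W : normedModType R) (f : V -> W) x v df :
  is_derive x v f df -> 'D_v f x = df.
Proof. by case. Qed.

Lemma poly_phi (R : realType) (r a : R) k :
  is_derive (0:R) (1:R) (fun h : R => (- (r + h * (2 * a + h))) ^+ k)
    (k%:R * (- r) ^+ k.-1 * (- (2 * a))).
Proof.
pose Q : {poly R} := - (r%:P + 'X * ((2 * a)%:P + 'X)).
apply: (is_derive_ext (f := horner (Q ^+ k))).
  by move=> y; rewrite /Q !hornerE.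
apply: is_derive_eq.
rewrite deriv_exp /Q !(derivN, derivD, derivM, derivC, derivX) !hornerE.
rewrite hornerMn hornerM horner_exp !hornerE -mulr_natl; ring.
Qed.

Lemma poly_phiX (R : realType) (r a : R) k :
  is_derive (0:R) (1:R) (fun h : R => (- (r + h * (2 * a + h))) ^+ k * h) ((- r) ^+ k).
Proof.
pose Q : {poly R} := - (r%:P + 'X * ((2 * a)%:P + 'X)).
apply: (is_derive_ext (f := horner (Q ^+ k * 'X))).
  by move=> y; rewrite /Q !hornerE.
apply: is_derive_eq.
rewrite derivM derivX deriv_exp /Q !(derivN, derivD, derivM, derivC, derivX).
rewrite hornerD !hornerM hornerMn hornerM !horner_exp !hornerE; ring.
Qed.

Section Main.
Variables (R : realType) (d : nat).
Local Notation A := 'rV[R]_d.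
Variables (mul : A -> A -> A) (one : A).
Hypothesis mulDl : forall (r : R) (a b c : A), mul (r *: a + b) c = r *: mul a c + mul b c.
Hypothesis mulDr : forall (r : R) (a b c : A), mul a (r *: b + c) = r *: mul a b + mul a c.
Hypothesis mul1l : forall a, mul one a = a.
Hypothesis mul1r : forall a, mul a one = a.
Variables (m : nat) (v : 'I_m.+1 -> A) (p : nat).
Hypothesis hp : (p < m)%N.
Hypothesis Hv0 : v ord0 = one.
Hypothesis Hvv : forall s, s != ord0 -> mul (v s) (v s) = - one.
Hypothesis Hanti : forall s t, s != ord0 -> t != ord0 -> s != t ->
  mul (v s) (v t) = - mul (v t) (v s).
Variables (g : 'rV[R]_p.+1 -> A).
Hypothesis Hg : forall (i : 'I_p.+1) y, derivable g y (delta_mx ord0 i).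
Variable k : nat.

Let F j (x : 'rV[R]_m.+1) := mul (apow mul one (xq p v x) j) (g (xpart p x)).

Lemma Feven y : F k.*2 y = (- rho p y) ^+ k *: g (xpart p y).
Proof. by rewrite /F (apow_even mulDl mulDr mul1r p Hvv Hanti) (amulZl mulDl) mul1l. Qed.

Lemma Fodd y : F k.*2.+1 y = (- rho p y) ^+ k *: mul (xq p v y) (g (xpart p y)).
Proof. by rewrite /F (apow_odd mulDl mulDr mul1r p Hvv Hanti) (amulZl mulDl). Qed.

Lemma dg (x : 'rV[R]_m.+1) (s : 'I_m.+1) :
  is_derive (0:R) (1:R) (fun h : R => g (h *: delta_mx ord0 (inord s : 'I_p.+1) + xpart p x))
    (partial (inord s) g (xpart p x)).
Proof.
apply: DeriveDef; first exact: (iffLR (derivable1P _ _ _) (@Hg (inord s) (xpart p x))).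
by rewrite /partial (@D_line _ _ _ g).
Qed.

Lemma P1 x (s : 'I_m.+1) : (s <= p)%N ->
  partial s (F k.*2) x = (- rho p x) ^+ k *: partial (inord s) g (xpart p x).
Proof.
move=> sp; rewrite {1}/partial D_line.
have E : (fun h : R => F k.*2 (h *: delta_mx ord0 s + x)) =
   (- rho p x) ^+ k \*: (fun h : R => g (h *: delta_mx ord0 (inord s : 'I_p.+1) + xpart p x)).
  by apply/funext => h; rewrite Feven rho_low // xpart_low.
by rewrite E (dval (is_deriveZ _ (dg x s))).
Qed.

Lemma P2 x (s : 'I_m.+1) : (s <= p)%N ->
  partial s (F k.*2.+1) x = (- rho p x) ^+ k *: mul (xq p v x) (partial (inord s) g (xpart p x)).
Proof.
move=> sp; rewrite {1}/partial D_line.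
have E : (fun h : R => F k.*2.+1 (h *: delta_mx ord0 s + x)) =
   (- rho p x) ^+ k \*: (fun h : R => mul (xq p v x) (g (h *: delta_mx ord0 (inord s : 'I_p.+1) + xpart p x))).
  by apply/funext => h; rewrite Fodd rho_low // xq_low // xpart_low.
have HL : forall (r : R) a b, mul (xq p v x) (r *: a + b) = r *: mul (xq p v x) a + mul (xq p v x) b.
  by move=> r a b; rewrite mulDr.
by rewrite E (dval (is_deriveZ _ (@is_derive_lin _ _ _ _ _ HL _ _ _ _ (dg x s)))).
Qed.

Lemma P3 x (s : 'I_m.+1) : (p < s)%N ->
  partial s (F k.*2) x = (k%:R * (- rho p x) ^+ k.-1 * (- (2 * x ord0 s))) *: g (xpart p x).
Proof.
move=> ps; rewrite {1}/partial D_line.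
have E : (fun h : R => F k.*2 (h *: delta_mx ord0 s + x)) =
   (fun h : R => (- (rho p x + h * (2 * x ord0 s + h))) ^+ k *: g (xpart p x)).
  by apply/funext => h; rewrite Feven rho_high // xpart_high.
by rewrite E (dval (is_deriveZr _ (poly_phi _ _ _))).
Qed.

Lemma P4 x (s : 'I_m.+1) : (p < s)%N ->
  partial s (F k.*2.+1) x = (k%:R * (- rho p x) ^+ k.-1 * (- (2 * x ord0 s))) *: mul (xq p v x) (g (xpart p x))
    + (- rho p x) ^+ k *: mul (v s) (g (xpart p x)).
Proof.
move=> ps; rewrite {1}/partial D_line.
have E : (fun h : R => F k.*2.+1 (h *: delta_mx ord0 s + x)) =
   (fun h : R => (- (rho p x + h * (2 * x ord0 s + h))) ^+ k *: mul (xq p v x) (g (xpart p x)) +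
   ((- (rho p x + h * (2 * x ord0 s + h))) ^+ k * h) *: mul (v s) (g (xpart p x))).
  apply/funext => h; rewrite Fodd rho_high // xpart_high // xq_high //.
  by rewrite mulDl scalerDr scalerA addrC.
rewrite E; apply: dval.
by apply: (is_derive_ext _ (is_deriveD (is_deriveZr _ (poly_phi _ _ _)) (is_deriveZr _ (poly_phiX _ _ _)))).
Qed.
End Main.

Set Implicit Arguments.
Unset Strict Implicit.

Section Split.
Variables (V : zmodType) (m p : nat).
Hypothesis hp : (p < m)%N.

Lemma split_nz (H : 'I_m.+1 -> V) :
  \sum_(s < m.+1 | s != ord0) H s =
  \sum_(s < m.+1 | (0 < s)%N && (s <= p)%N) H s + \sum_(s < m.+1 | (p < s)%N) H s.
Proof.
rewrite (bigID (fun s : 'I_m.+1 => (p < s)%N)) /= addrC; congr (_ + _).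
  by apply: eq_bigl => s; rewrite -leqNgt lt0n andbC.
apply: eq_bigl => s; case ps: (p < s)%N; rewrite ?andbF ?andbT //.
by apply/eqP => s0; rewrite s0 in ps.
Qed.

Lemma split_all (H : 'I_m.+1 -> V) :
  \sum_(s < m.+1) H s =
  H ord0 + \sum_(s < m.+1 | (0 < s)%N && (s <= p)%N) H s + \sum_(s < m.+1 | (p < s)%N) H s.
Proof. by rewrite (bigD1 ord0) //= split_nz addrA. Qed.

Lemma reindex_low (K : 'I_m.+1 -> 'I_p.+1 -> V) :
  \sum_(i < p.+1 | i != ord0) K (inord i) i =
  \sum_(s < m.+1 | (0 < s)%N && (s <= p)%N) K s (inord s).
Proof.
rewrite (eq_bigl (fun i : 'I_p.+1 => (0 < i)%N)); last by move=> i; rewrite lt0n.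
rewrite (eq_bigr (fun i : 'I_p.+1 => K (inord i) (inord i))); last by move=> i _; rewrite inord_val.
rewrite (big_ord_widen_cond m.+1 (fun i => (0 < i)%N) (fun i => K (inord i) (inord i))); last by lia.
apply: eq_big => s; first by rewrite ltnS.
by rewrite inord_val.
Qed.
End Split.

Unset Implicit Arguments.
Set Strict Implicit.

Lemma cancel4 (V : zmodType) (x y z w y' z' : V) :
  x + y + z + w = x + y' + z' + w -> y + z = y' + z'.
Proof. by move=> H; apply: (addrI x); apply: (addIr w); rewrite !addrA. Qed.

Notation FF mul one v p g j := (fun x => mul (apow mul one (xq p v x) j) (g (xpart p x))).

Theorem lemma3p9 (R : realType) (d : nat)
  (mul : 'rV[R]_d -> 'rV[R]_d -> 'rV[R]_d) (one : 'rV[R]_d)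
  (conj : 'rV[R]_d -> 'rV[R]_d)
  (HA : alt_algebra_anti_inv mul one conj)
  (m : nat) (v : 'I_m.+1 -> 'rV[R]_d)
  (Hv : paravector_basis mul one conj v)
  (p : nat) (hp : (p < m)%N)
  (g : 'rV[R]_p.+1 -> 'rV[R]_d) (Hg : C1 g) (k : nat) :
  let q := (m - p)%N in
  let X := fun x : 'rV[R]_m.+1 => xq p v x in
  let F := fun (j : nat) (x : 'rV[R]_m.+1) => mul (apow mul one (X x) j) (g (xpart p x)) in
  (forall x : 'rV[R]_m.+1,
     Dop mul v (F k.*2) x =
       mul (apow mul one (X x) k.*2) (Dop mul (vpart p v) g (xpart p x))
       - (k.*2)%:R *: mul (apow mul one (X x) k.*2.-1) (g (xpart p x)))
  /\ (forall x : 'rV[R]_m.+1,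
     Dop mul v (F k.*2.+1) x =
       mul (apow mul one (X x) k.*2.+1) (Dbar mul (vpart p v) g (xpart p x))
       - (k.*2 + q)%:R *: mul (apow mul one (X x) k.*2) (g (xpart p x)))
  /\ (forall x : 'rV[R]_m.+1,
     Dbar mul v (F k.*2) x =
       mul (apow mul one (X x) k.*2) (Dbar mul (vpart p v) g (xpart p x))
       + (k.*2)%:R *: mul (apow mul one (X x) k.*2.-1) (g (xpart p x)))
  /\ (forall x : 'rV[R]_m.+1,
     Dbar mul v (F k.*2.+1) x =
       mul (apow mul one (X x) k.*2.+1) (Dop mul (vpart p v) g (xpart p x))
       + (k.*2 + q)%:R *: mul (apow mul one (X x) k.*2) (g (xpart p x))).
Proof.
move=> q X F.
rewrite /q /F /X; clear q F X; cbv beta.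
case: HA => _ [mulDl mulDr] unit alt _.
have mul1l a : mul one a = a by case: (unit a).
have mul1r a : mul a one = a by case: (unit a).
have altE a b : mul (mul a a) b = mul a (mul a b).
  by case: (alt a b) => /eqP; rewrite /associator subr_eq0 => /eqP.
case: Hv => [[_ Hv0] HSA Hanti _ _].
have Hvv s : s != ord0 -> mul (v s) (v s) = - one.
  move=> /HSA [tr nr].
  have cv : conj (v s) = - v s by apply/eqP; rewrite -addr_eq0 addrC; apply/eqP.
  by move: nr; rewrite /nrmA cv (amulNr mulDr) => <-; rewrite opprK.
have Hg' i y : derivable g y (delta_mx ord0 i) by case: (Hg i) => H _; exact: H.
have inord0 n : (inord 0 : 'I_n.+1) = ord0 by apply/val_inj; rewrite /= inordK.
have lin_alt a c b : mul (mul a c) b + mul (mul c a) b = mul a (mul c b) + mul c (mul a b).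
  have := altE (a + c) b.
  rewrite !(amulAl mulDl) !(amulAr mulDr) !(amulAl mulDl) !altE !addrA.
  exact: cancel4.
have anti (s : 'I_m.+1) (x : 'rV[R]_m.+1) (b : 'rV[R]_d) : (0 < s)%N -> (s <= p)%N ->
    mul (v s) (mul (xq p v x) b) = - mul (xq p v x) (mul (v s) b).
  move=> s0 sp.
  have vX : mul (v s) (xq p v x) + mul (xq p v x) (v s) = 0.
    rewrite /xq (amul_sumr mulDr) (amul_suml mulDl) -big_split big1 // => t pt.
    have sn : s != ord0 by apply/eqP => e; rewrite e in s0.
    have tn : t != ord0 by apply/eqP => e; rewrite e in pt.
    have st : s != t by apply/eqP => e; move: pt; rewrite -e ltnNge sp.
    rewrite (amulZr mulDr) (amulZl mulDl).
    change (x ord0 t *: mul (v s) (v t) + x ord0 t *: mul (v t) (v s) = 0).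
    by rewrite Hanti // scalerN addNr.
  have := lin_alt (v s) (xq p v x) b.
  rewrite -(amulAl mulDl) vX (amul0l mulDl) => /esym/eqP; rewrite addr_eq0 => /eqP.
  done.
have XXG (x : 'rV[R]_m.+1) (b : 'rV[R]_d) : mul (xq p v x) (mul (xq p v x) b) = - rho p x *: b.
  by rewrite -altE (XX mulDl mulDr p Hvv Hanti) (amulZl mulDl) mul1l.
have vvG (s : 'I_m.+1) (b : 'rV[R]_d) : s != ord0 -> mul (v s) (mul (v s) b) = - b.
  by move=> s0; rewrite -altE Hvv // (amulNl mulDl) mul1l.
have sumX (x : 'rV[R]_m.+1) (b : 'rV[R]_d) : \sum_(s < m.+1 | (p < s)%N) x ord0 s *: mul (v s) b = mul (xq p v x) b.
  by rewrite /xq (amul_suml mulDl); apply: eq_bigr => s _; rewrite (amulZl mulDl).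
have count (w : 'rV[R]_d) : \sum_(s < m.+1 | (p < s)%N) w = w *+ (m - p).
  rewrite -subSS -sumr_const_nat big_geq_mkord.
  by apply: eq_bigl => s.
pose Lg (y : 'rV[R]_p.+1) := \sum_(s < m.+1 | (0 < s)%N && (s <= p)%N) mul (v s) (partial (inord s) g y).
have Dg_op (y : 'rV[R]_p.+1) : Dop mul (vpart p v) g y = partial ord0 g y + Lg y.
  rewrite /Dop (bigD1 ord0) //= /vpart inord0 Hv0 mul1l; congr (_ + _).
  exact: (reindex_low hp (fun s i => mul (v s) (partial i g y))).
have Dg_bar (y : 'rV[R]_p.+1) : Dbar mul (vpart p v) g y = partial ord0 g y - Lg y.
  rewrite /Dbar; congr (_ - _).
  exact: (reindex_low hp (fun s i => mul (v s) (partial i g y))).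
have Pe1 := P1 mulDl mulDr mul1l mul1r hp Hvv Hanti Hg' k.
have Pe2 := P2 mulDl mulDr mul1r hp Hvv Hanti Hg' k.
have Pe3 := @P3 _ _ _ _ mulDl mulDr mul1l mul1r _ _ p Hvv Hanti g k.
have Pe4 := @P4 _ _ _ _ mulDl mulDr mul1r _ _ p Hvv Hanti g k.
have T0e x : mul (v ord0) (partial ord0 (FF mul one v p g k.*2) x) =
    (- rho p x) ^+ k *: partial ord0 g (xpart p x).
  rewrite Hv0 mul1l; apply: etrans (@Pe1 x ord0 (leq0n p)) _; by rewrite inord0.
have T0o x : mul (v ord0) (partial ord0 (FF mul one v p g k.*2.+1) x) =
    (- rho p x) ^+ k *: mul (xq p v x) (partial ord0 g (xpart p x)).
  rewrite Hv0 mul1l; apply: etrans (@Pe2 x ord0 (leq0n p)) _; by rewrite inord0.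
have Le x : \sum_(s < m.+1 | (0 < s)%N && (s <= p)%N) mul (v s) (partial s (FF mul one v p g k.*2) x)
    = (- rho p x) ^+ k *: Lg (xpart p x).
  rewrite scaler_sumr; apply: eq_bigr => s /andP[_ sp].
  by apply: etrans (congr1 (mul (v s)) (Pe1 x s sp)) _; rewrite (amulZr mulDr).
have Lo x : \sum_(s < m.+1 | (0 < s)%N && (s <= p)%N) mul (v s) (partial s (FF mul one v p g k.*2.+1) x)
    = - ((- rho p x) ^+ k *: mul (xq p v x) (Lg (xpart p x))).
  rewrite (amul_sumr mulDr) scaler_sumr -sumrN; apply: eq_bigr => s /andP[s0 sp].
  by apply: etrans (congr1 (mul (v s)) (Pe2 x s sp)) _; rewrite (amulZr mulDr) anti // scalerN.
have He x : \sum_(s < m.+1 | (p < s)%N) mul (v s) (partial s (FF mul one v p g k.*2) x)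
    = (- (2 * k%:R * (- rho p x) ^+ k.-1)) *: mul (xq p v x) (g (xpart p x)).
  rewrite -sumX scaler_sumr; apply: eq_bigr => s ps.
  apply: etrans (congr1 (mul (v s)) (Pe3 x s ps)) _.
  by rewrite (amulZr mulDr) scalerA; congr (_ *: _); ring.
have Ho x : \sum_(s < m.+1 | (p < s)%N) mul (v s) (partial s (FF mul one v p g k.*2.+1) x)
    = (- (2 * k%:R * (- rho p x) ^+ k.-1) * (- rho p x)) *: g (xpart p x)
      - ((- rho p x) ^+ k *: g (xpart p x)) *+ (m - p).
  rewrite (eq_bigr (fun s => (- (2 * k%:R * (- rho p x) ^+ k.-1)) *:
      (x ord0 s *: mul (v s) (mul (xq p v x) (g (xpart p x))))
      + - ((- rho p x) ^+ k *: g (xpart p x)))); last first.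
    move=> s ps.
    have sn : s != ord0 by apply/eqP => e; rewrite e in ps.
    apply: etrans (congr1 (mul (v s)) (Pe4 x s ps)) _.
    rewrite (amulAr mulDr) !(amulZr mulDr) vvG // scalerA scalerN.
    by congr (_ *: _ + _); ring.
  rewrite big_split /= -scaler_sumr sumX XXG sumrN count scalerA.
  by [].
have c1E (n : nat) (r : R) : n%:R * r ^+ n.-1 * r = n%:R * r ^+ n.
  by case: n => [|n']; rewrite ?mul0r //= exprS; ring.
have T2k (n : nat) x : (n.*2)%:R *: mul (apow mul one (xq p v x) n.*2.-1) (g (xpart p x)) =
    (2 * n%:R * (- rho p x) ^+ n.-1) *: mul (xq p v x) (g (xpart p x)).
  case: n => [|k']; first by rewrite mulr0 mul0r !scale0r.
  have -> : (k'.+1).*2.-1 = k'.*2.+1 by rewrite doubleS.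
  rewrite (apow_odd mulDl mulDr mul1r p Hvv Hanti) (amulZl mulDl) scalerA.
  by congr (_ *: _); rewrite -muln2 natrM; ring.
have Ae x : apow mul one (xq p v x) k.*2 = (- rho p x) ^+ k *: one :=
  apow_even mulDl mulDr mul1r p Hvv Hanti x k.
have Ao x : apow mul one (xq p v x) k.*2.+1 = (- rho p x) ^+ k *: xq p v x :=
  apow_odd mulDl mulDr mul1r p Hvv Hanti x k.
have T0e' x : partial ord0 (FF mul one v p g k.*2) x =
    (- rho p x) ^+ k *: partial ord0 g (xpart p x).
  by rewrite -T0e Hv0 mul1l.
have T0o' x : partial ord0 (FF mul one v p g k.*2.+1) x =
    (- rho p x) ^+ k *: mul (xq p v x) (partial ord0 g (xpart p x)).
  by rewrite -T0o Hv0 mul1l.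
have coef (r : R) : - (2 * k%:R * r ^+ k.-1) * r = - 2 * (k%:R * r ^+ k).
  by rewrite -c1E; ring.
split; [|split; [|split]] => x.
- rewrite Dg_op /Dop (@split_all _ m p) T0e Le He.
  by rewrite T2k Ae (amulZl mulDl) mul1l scalerDr scaleNr.
- rewrite Dg_bar /Dop (@split_all _ m p) T0o Lo Ho Ao Ae.
  rewrite (amulZl mulDl _ (xq p v x)) (amulZl mulDl _ one) mul1l.
  rewrite (amulAr mulDr (partial ord0 g (xpart p x))) (amulNr mulDr (Lg (xpart p x))).
  rewrite scalerDr scalerN -(scaler_nat (m - p)) !scalerA -!addrA; congr (_ + (_ + _)).
  rewrite -scalerBl -[RHS]scaleNr; congr (_ *: _).
  by rewrite coef natrD -muln2 natrM; ring.
- rewrite Dg_bar /Dbar (@split_nz _ m p) T0e' Le He.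
  by rewrite T2k Ae (amulZl mulDl) mul1l scalerBr opprD scaleNr opprK addrA.
- rewrite Dg_op /Dbar (@split_nz _ m p) T0o' Lo Ho Ao Ae.
  rewrite (amulZl mulDl _ (xq p v x)) (amulZl mulDl _ one) mul1l.
  rewrite (amulAr mulDr (partial ord0 g (xpart p x))) scalerDr.
  rewrite -(scaler_nat (m - p)) !scalerA opprD opprK -!addrA; congr (_ + (_ + _)).
  rewrite -scalerBl -[LHS]scaleNr; congr (_ *: _).
  by rewrite coef natrD -muln2 natrM; ring.
Qed.
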